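(* Let $\Sigma=(+1,-1,-1,-1,-1)$. If $\delta=1$ then $\mathcal P_{\Sigma,\delta}H_5=\varnothing$. If $\delta=\omega$ or $\delta=\omega^2$ then $\mathcal P_{\Sigma,\delta}H_5\neq\varnothing$.
   Context: $V=\mathbb C^3$ with Hermitian form of signature $(-,+,+)$; the sign $\sigma p$ of a nonisotropic $p\in\mathbb PV$ is $-1$ if $\langle p,p\rangle<0$ and $+1$ if $\langle p,p\rangle>0$. $\mathrm{SU}(2,1)$ = determinant-one form-preserving maps, $\mathrm{PU}(2,1)=\mathrm{SU}(2,1)/\{1,\omega,\omega^2\}$, $\omega=e^{2\pi i/3}$. For nonisotropic $p$, $R^px=2\frac{\langle x,p\rangle}{\langle p,p\rangle}p-x$; $\mathrm{ta}(p,q)=\frac{\langle p,q\rangle\langle q,p\rangle}{\langle p,p\rangle\langle q,q\rangle}$. $H_5=\langle r_1,\dots,r_5\mid r_i^2=r_5\cdots r_1=1\rangle$. $\mathcal P_{\Sigma,\delta}H_5$ is the set of representations $\varrho:H_5\to\mathrm{PU}(2,1)$ with $\varrho(r_i)=R^{p_i}$ for nonisotropic $p_i$ such that $\mathrm{ta}(p_i,p_j)\neq0,1$ for $i\neq j$, $\sigma p_i=\sigma_i$, and $R^{p_5}\cdots R^{p_1}=\delta$ in $\mathrm{SU}(2,1)$. *)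

(* Defs.v *)
(* The complex numbers are modelled as R[i] for an arbitrary
   real closed field R (C = R[i] for R = the reals is one instance). *)
From HB Require Import structures.
From mathcomp Require Import all_boot all_order all_algebra.
From mathcomp Require Import complex.
Set Implicit Arguments. Unset Strict Implicit. Unset Printing Implicit Defensive.
Import Order.TTheory GRing.Theory Num.Theory.
Local Open Scope ring_scope.

Section PU21.
Variable R : rcfType.
Local Notation C := (R[i]).

(* V = C^3 as column vectors; Hermitian form of signature (-,+,+),
   linear in the first argument, antilinear in the second:
   <x,y> = - x_0 conj(y_0) + x_1 conj(y_1) + x_2 conj(y_2). *)
Definition sgnJ (i : 'I_3) : C := if (i == 0 :> nat) then -1 else 1.

Definition herm (x y : 'cV[C]_3) : C :=
  \sum_(i < 3) sgnJ i * x i 0 * (y i 0)^*.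

Definition nonisotropic (p : 'cV[C]_3) : bool := herm p p != 0.

Definition has_sign (s : int) (p : 'cV[C]_3) : Prop :=
  (s = (-1)%Z /\ herm p p < 0) \/ (s = 1%Z /\ 0 < herm p p).

(* R^p x = 2 <x,p>/<p,p> p - x, as a 3x3 matrix acting on column vectors *)
Definition refl (p : 'cV[C]_3) : 'M[C]_3 :=
  \matrix_(i < 3, j < 3)
     (2 * p i 0 * sgnJ j * (p j 0)^* / herm p p - (i == j)%:R).

Definition ta (p q : 'cV[C]_3) : C :=
  herm p q * herm q p / (herm p p * herm q q).

Definition omega : C := (-1 + 'i * sqrtC 3) / 2.

(* A representation in P_{Sigma,delta} H_5 is given by the points p_1..p_5
   (indexed 0..4 here) with rho(r_i) = R^{p_i}; the conditions: *)
Definition in_P (Sigma : 'I_5 -> int) (delta : C) (p : 'I_5 -> 'cV[C]_3) : Prop :=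
  [/\ forall i, nonisotropic (p i),
      forall i j, i != j -> ta (p i) (p j) != 0 /\ ta (p i) (p j) != 1,
      forall i, has_sign (Sigma i) (p i) &
      refl (p 4) *m refl (p 3) *m refl (p 2) *m refl (p 1) *m refl (p 0)
        = delta%:M ].

End PU21.

Definition Sigma8 (i : 'I_5) : int := if (i == 0 :> nat) then 1%Z else (-1)%Z.

(* Main.v *)
Require Import Defs.
From HB Require Import structures.
From mathcomp Require Import all_boot all_order all_algebra.
From mathcomp Require Import complex.
From mathcomp Require Import ring.
Import Order.TTheory GRing.Theory Num.Theory.
Local Open Scope ring_scope.
Section S.
Variable R : rcfType.
Local Notation C := (R[i]).
Local Notation w := (omega R).

Lemma w2 : w ^+ 2 + w + 1 = 0.
Proof.
rewrite /omega.
have h3 : sqrtC (3 : C) ^+ 2 = 3 by rewrite sqrtCK.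
rewrite expr2.
have -> : (-1 + 'i * sqrtC 3) / 2 * ((-1 + 'i * sqrtC 3) / 2) + (-1 + 'i * sqrtC 3) / 2 + 1
  = (('i ^+ 2) * (sqrtC (3:C)) ^+ 2 + 3) / 4 :> C by field.
by rewrite h3 sqrCi; field.
Qed.

Lemma conjw : w^* = -1 - w.
Proof.
have e : w^* = (-1 + ('i : C)^* * (sqrtC (3:C))^*) / 2.
  rewrite /omega rmorphM rmorphD rmorphN rmorph1 fmorphV rmorph_nat rmorphM.
  reflexivity.
have e3 : (sqrtC (3:C))^* = sqrtC 3.
  apply/CrealP; apply: sqrtC_real; by rewrite ler0n.
rewrite e e3 conjCi /omega.
by field.
Qed.

Definition E (a b : int) : C := a%:~R + b%:~R * w.
Lemma conjE a b : (E a b)^* = a%:~R + b%:~R * (-1 - w).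
Proof. rewrite /E rmorphD rmorphM !rmorph_int; congr (_ + _ * _); exact: conjw. Qed.

Definition vec3 (a b c : C) : 'cV[C]_3 :=
  \col_(i < 3) (if i == 0 :> nat then a else if i == 1 :> nat then b else c).
Definition mk3 (a00 a01 a02 a10 a11 a12 a20 a21 a22 : C) : 'M[C]_3 :=
  \matrix_(i < 3, j < 3)
    (if i == 0 :> nat then (if j == 0 :> nat then a00 else if j == 1 :> nat then a01 else a02)
     else if i == 1 :> nat then (if j == 0 :> nat then a10 else if j == 1 :> nat then a11 else a12)
     else (if j == 0 :> nat then a20 else if j == 1 :> nat then a21 else a22)).

Lemma herm3 a b c x y z : herm (vec3 a b c) (vec3 x y z) = - (a * x^*) + b * y^* + c * z^*.
Proof.
rewrite /herm !big_ord_recr big_ord0 /= !mxE /= /sgnJ /=.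
by ring.
Qed.

Lemma refl3 a b c : refl (vec3 a b c) =
  mk3 (2 * a * (-1) * a^* / herm (vec3 a b c) (vec3 a b c) - 1)
      (2 * a * b^* / herm (vec3 a b c) (vec3 a b c))
      (2 * a * c^* / herm (vec3 a b c) (vec3 a b c))
      (2 * b * (-1) * a^* / herm (vec3 a b c) (vec3 a b c))
      (2 * b * b^* / herm (vec3 a b c) (vec3 a b c) - 1)
      (2 * b * c^* / herm (vec3 a b c) (vec3 a b c))
      (2 * c * (-1) * a^* / herm (vec3 a b c) (vec3 a b c))
      (2 * c * b^* / herm (vec3 a b c) (vec3 a b c))
      (2 * c * c^* / herm (vec3 a b c) (vec3 a b c) - 1).
Proof.
apply/matrixP => i j; rewrite !mxE /sgnJ.
case: i => [[|[|[|//]]] Hi]; case: j => [[|[|[|//]]] Hj] /=; rewrite ?mxE /=; ring.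
Qed.

Lemma mul3 a00 a01 a02 a10 a11 a12 a20 a21 a22 b00 b01 b02 b10 b11 b12 b20 b21 b22 :
  mk3 a00 a01 a02 a10 a11 a12 a20 a21 a22 *m mk3 b00 b01 b02 b10 b11 b12 b20 b21 b22 =
  mk3 (a00*b00 + a01*b10 + a02*b20) (a00*b01 + a01*b11 + a02*b21) (a00*b02 + a01*b12 + a02*b22)
      (a10*b00 + a11*b10 + a12*b20) (a10*b01 + a11*b11 + a12*b21) (a10*b02 + a11*b12 + a12*b22)
      (a20*b00 + a21*b10 + a22*b20) (a20*b01 + a21*b11 + a22*b21) (a20*b02 + a21*b12 + a22*b22).
Proof.
apply/matrixP => i j; rewrite !mxE !big_ord_recr big_ord0 /= !mxE.
case: i => [[|[|[|//]]] Hi]; case: j => [[|[|[|//]]] Hj] /=; ring.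
Qed.

Lemma scal3 (x : C) : x%:M = mk3 x 0 0 0 x 0 0 0 x.
Proof.
apply/matrixP => i j; rewrite !mxE.
by case: i => [[|[|[|//]]] Hi]; case: j => [[|[|[|//]]] Hj].
Qed.

Lemma modL (f g : C -> C) :
  (forall y, f y = g y + (f 1 - g 1) / 3 * (y ^+ 2 + y + 1)) -> f w = g w.
Proof. by move=> H; rewrite H w2 mulr0 addr0. Qed.

Ltac modsolve :=
  rewrite ?conjE /E;
  match goal with |- ?L = ?Rr =>
    let fL := eval pattern (omega R) in L in
    let fR := eval pattern (omega R) in Rr in
    match fL with ?FL _ => match fR with ?FR _ =>
      apply: (@modL FL FR); let y := fresh "y" in move=> y; cbv beta; by field
    end end end.

Lemma neg_ok (x : C) : 0 < x -> (- x != 0) /\ (- x != 1).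
Proof.
move=> hx; split; first by rewrite oppr_eq0 gt_eqF.
apply/eqP => h; have : - x < 0 by rewrite oppr_lt0.
by rewrite h ltr10.
Qed.
Lemma big_ok (x : C) : 0 < x -> (1 + x != 0) /\ (1 + x != 1).
Proof.
move=> hx; split.
  by rewrite gt_eqF // addr_gt0.
by rewrite -subr_eq0 addrC addKr gt_eqF.
Qed.
Ltac pos := repeat match goal with
  | |- is_true (0 < _ * _) => apply: mulr_gt0
  | |- is_true (0 < _ + _) => apply: addr_gt0
  | |- is_true (0 < _^-1) => rewrite invr_gt0
  | |- is_true (0 < 1) => exact: ltr01
  | |- _ => by rewrite ltr0n
  end.
Definition Pa0 : 'cV[C]_3 := vec3 (E (-3) (2)) (E (1) (-2)) (E (1) (-4)).
Definition Pa1 : 'cV[C]_3 := vec3 (E (-13) (8)) (E (1) (-3)) (E (2) (-16)).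
Definition Pa2 : 'cV[C]_3 := vec3 (E (1) (-42)) (E (9) (7)) (E (22) (44)).
Definition Pa3 : 'cV[C]_3 := vec3 (E (1) (0)) (E (0) (0)) (E (0) (0)).
Definition Pa4 : 'cV[C]_3 := vec3 (E (3) (0)) (E (-1) (-1)) (E (0) (0)).
Lemma ha00 : herm Pa0 Pa0 = (9 + 0 * w).
Proof. rewrite /Pa0 /Pa0 herm3; modsolve. Qed.
Lemma ha01 : herm Pa0 Pa1 = (13 + 11 * w).
Proof. rewrite /Pa0 /Pa1 herm3; modsolve. Qed.
Lemma ha02 : herm Pa0 Pa2 = (3 + (- 33) * w).
Proof. rewrite /Pa0 /Pa2 herm3; modsolve. Qed.
Lemma ha03 : herm Pa0 Pa3 = (3 + (- 2) * w).
Proof. rewrite /Pa0 /Pa3 herm3; modsolve. Qed.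
Lemma ha04 : herm Pa0 Pa4 = (11 + (- 3) * w).
Proof. rewrite /Pa0 /Pa4 herm3; modsolve. Qed.
Lemma ha10 : herm Pa1 Pa0 = (2 + (- 11) * w).
Proof. rewrite /Pa1 /Pa0 herm3; modsolve. Qed.
Lemma ha11 : herm Pa1 Pa1 = ((- 32) + 0 * w).
Proof. rewrite /Pa1 /Pa1 herm3; modsolve. Qed.
Lemma ha12 : herm Pa1 Pa2 = (128 + 64 * w).
Proof. rewrite /Pa1 /Pa2 herm3; modsolve. Qed.
Lemma ha13 : herm Pa1 Pa3 = (13 + (- 8) * w).
Proof. rewrite /Pa1 /Pa3 herm3; modsolve. Qed.
Lemma ha14 : herm Pa1 Pa4 = (42 + (- 20) * w).
Proof. rewrite /Pa1 /Pa4 herm3; modsolve. Qed.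
Lemma ha20 : herm Pa2 Pa0 = (36 + 33 * w).
Proof. rewrite /Pa2 /Pa0 herm3; modsolve. Qed.
Lemma ha21 : herm Pa2 Pa1 = (64 + (- 64) * w).
Proof. rewrite /Pa2 /Pa1 herm3; modsolve. Qed.
Lemma ha22 : herm Pa2 Pa2 = ((- 288) + 0 * w).
Proof. rewrite /Pa2 /Pa2 herm3; modsolve. Qed.
Lemma ha23 : herm Pa2 Pa3 = ((- 1) + 42 * w).
Proof. rewrite /Pa2 /Pa3 herm3; modsolve. Qed.
Lemma ha24 : herm Pa2 Pa4 = ((- 10) + 128 * w).
Proof. rewrite /Pa2 /Pa4 herm3; modsolve. Qed.
Lemma ha30 : herm Pa3 Pa0 = (5 + 2 * w).
Proof. rewrite /Pa3 /Pa0 herm3; modsolve. Qed.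
Lemma ha31 : herm Pa3 Pa1 = (21 + 8 * w).
Proof. rewrite /Pa3 /Pa1 herm3; modsolve. Qed.
Lemma ha32 : herm Pa3 Pa2 = ((- 43) + (- 42) * w).
Proof. rewrite /Pa3 /Pa2 herm3; modsolve. Qed.
Lemma ha33 : herm Pa3 Pa3 = ((- 1) + 0 * w).
Proof. rewrite /Pa3 /Pa3 herm3; modsolve. Qed.
Lemma ha34 : herm Pa3 Pa4 = ((- 3) + 0 * w).
Proof. rewrite /Pa3 /Pa4 herm3; modsolve. Qed.
Lemma ha40 : herm Pa4 Pa0 = (14 + 3 * w).
Proof. rewrite /Pa4 /Pa0 herm3; modsolve. Qed.
Lemma ha41 : herm Pa4 Pa1 = (62 + 20 * w).
Proof. rewrite /Pa4 /Pa1 herm3; modsolve. Qed.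
Lemma ha42 : herm Pa4 Pa2 = ((- 138) + (- 128) * w).
Proof. rewrite /Pa4 /Pa2 herm3; modsolve. Qed.
Lemma ha43 : herm Pa4 Pa3 = ((- 3) + 0 * w).
Proof. rewrite /Pa4 /Pa3 herm3; modsolve. Qed.
Lemma ha44 : herm Pa4 Pa4 = ((- 8) + 0 * w).
Proof. rewrite /Pa4 /Pa4 herm3; modsolve. Qed.
Lemma ra0 : refl Pa0 = mk3 (((- 47) + 0 * w) / 9) (((- 26) + (- 8) * w) / 9) (((- 46) + (- 20) * w) / 9) ((18 + (- 8) * w) / 9) ((5 + 0 * w) / 9) ((26 + 4 * w) / 9) ((26 + (- 20) * w) / 9) ((22 + (- 4) * w) / 9) ((11 + 0 * w) / 3).
Proof. rewrite /Pa0 refl3 -/(Pa0) ha00; congr (mk3 _ _ _ _ _ _ _ _ _); modsolve. Qed.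
Lemma ra1 : refl Pa1 = mk3 ((321 + 0 * w) / 16) ((76 + 31 * w) / 16) ((181 + 96 * w) / 8) (((- 45) + 31 * w) / 16) (((- 29) + 0 * w) / 16) (((- 33) + (- 5) * w) / 8) (((- 85) + 96 * w) / 8) (((- 28) + 5 * w) / 8) (((- 77) + 0 * w) / 4).
Proof. rewrite /Pa1 refl3 -/(Pa1) ha11; congr (mk3 _ _ _ _ _ _ _ _ _); modsolve. Qed.
Lemma ra2 : refl Pa2 = mk3 (((663 + 1000 * 1) + 0 * w) / 144) ((292 + 385 * w) / 144) ((935 + 484 * w) / 72) ((93 + 385 * w) / 144) (((- 211) + 0 * w) / 144) (((- 55) + 121 * w) / 72) (((- 451) + 484 * w) / 72) (((- 176) + (- 121) * w) / 72) (((- 133) + 0 * w) / 12).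
Proof. rewrite /Pa2 refl3 -/(Pa2) ha22; congr (mk3 _ _ _ _ _ _ _ _ _); modsolve. Qed.
Lemma ra3 : refl Pa3 = mk3 (1 + 0 * w) (0 + 0 * w) (0 + 0 * w) (0 + 0 * w) ((- 1) + 0 * w) (0 + 0 * w) (0 + 0 * w) (0 + 0 * w) ((- 1) + 0 * w).
Proof. rewrite /Pa3 refl3 -/(Pa3) ha33; congr (mk3 _ _ _ _ _ _ _ _ _); modsolve. Qed.
Lemma ra4 : refl Pa4 = mk3 ((5 + 0 * w) / 4) ((0 + (- 3) * w) / 4) (0 + 0 * w) (((- 3) + (- 3) * w) / 4) (((- 5) + 0 * w) / 4) (0 + 0 * w) (0 + 0 * w) (0 + 0 * w) ((- 1) + 0 * w).
Proof. rewrite /Pa4 refl3 -/(Pa4) ha44; congr (mk3 _ _ _ _ _ _ _ _ _); modsolve. Qed.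
Lemma ma0 : mk3 ((5 + 0 * w) / 4) ((0 + (- 3) * w) / 4) (0 + 0 * w) (((- 3) + (- 3) * w) / 4) (((- 5) + 0 * w) / 4) (0 + 0 * w) (0 + 0 * w) (0 + 0 * w) ((- 1) + 0 * w) *m mk3 (1 + 0 * w) (0 + 0 * w) (0 + 0 * w) (0 + 0 * w) ((- 1) + 0 * w) (0 + 0 * w) (0 + 0 * w) (0 + 0 * w) ((- 1) + 0 * w) = mk3 ((5 + 0 * w) / 4) ((0 + 3 * w) / 4) (0 + 0 * w) (((- 3) + (- 3) * w) / 4) ((5 + 0 * w) / 4) (0 + 0 * w) (0 + 0 * w) (0 + 0 * w) (1 + 0 * w).
Proof. rewrite mul3; congr (mk3 _ _ _ _ _ _ _ _ _); modsolve. Qed.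
Lemma ma1 : mk3 ((5 + 0 * w) / 4) ((0 + 3 * w) / 4) (0 + 0 * w) (((- 3) + (- 3) * w) / 4) ((5 + 0 * w) / 4) (0 + 0 * w) (0 + 0 * w) (0 + 0 * w) (1 + 0 * w) *m mk3 (((663 + 1000 * 1) + 0 * w) / 144) ((292 + 385 * w) / 144) ((935 + 484 * w) / 72) ((93 + 385 * w) / 144) (((- 211) + 0 * w) / 144) (((- 55) + 121 * w) / 72) (((- 451) + 484 * w) / 72) (((- 176) + (- 121) * w) / 72) (((- 133) + 0 * w) / 12) = mk3 (((790 + 1000 * 1) + (- 219) * w) / 144) ((365 + 323 * w) / 144) (((78 + 1000 * 1) + 473 * w) / 72) (((- (131 + 1000 * 1)) + (- 766) * w) / 144) (((- 194) + (- 219) * w) / 144) (((- 407) + (- 550) * w) / 72) (((- 451) + 484 * w) / 72) (((- 176) + (- 121) * w) / 72) (((- 133) + 0 * w) / 12).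
Proof. rewrite mul3; congr (mk3 _ _ _ _ _ _ _ _ _); modsolve. Qed.
Lemma ma2 : mk3 (((790 + 1000 * 1) + (- 219) * w) / 144) ((365 + 323 * w) / 144) (((78 + 1000 * 1) + 473 * w) / 72) (((- (131 + 1000 * 1)) + (- 766) * w) / 144) (((- 194) + (- 219) * w) / 144) (((- 407) + (- 550) * w) / 72) (((- 451) + 484 * w) / 72) (((- 176) + (- 121) * w) / 72) (((- 133) + 0 * w) / 12) *m mk3 ((321 + 0 * w) / 16) ((76 + 31 * w) / 16) ((181 + 96 * w) / 8) (((- 45) + 31 * w) / 16) (((- 29) + 0 * w) / 16) (((- 33) + (- 5) * w) / 8) (((- 85) + 96 * w) / 8) (((- 28) + 5 * w) / 8) (((- 77) + 0 * w) / 4) = mk3 ((0 + (- 47) * w) / 9) ((8 + (- 18) * w) / 9) ((20 + (- 26) * w) / 9) ((8 + 26 * w) / 9) ((0 + 5 * w) / 9) (((- 4) + 22 * w) / 9) ((20 + 46 * w) / 9) ((4 + 26 * w) / 9) ((0 + 11 * w) / 3).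
Proof. rewrite mul3; congr (mk3 _ _ _ _ _ _ _ _ _); modsolve. Qed.
Lemma ma3 : mk3 ((0 + (- 47) * w) / 9) ((8 + (- 18) * w) / 9) ((20 + (- 26) * w) / 9) ((8 + 26 * w) / 9) ((0 + 5 * w) / 9) (((- 4) + 22 * w) / 9) ((20 + 46 * w) / 9) ((4 + 26 * w) / 9) ((0 + 11 * w) / 3) *m mk3 (((- 47) + 0 * w) / 9) (((- 26) + (- 8) * w) / 9) (((- 46) + (- 20) * w) / 9) ((18 + (- 8) * w) / 9) ((5 + 0 * w) / 9) ((26 + 4 * w) / 9) ((26 + (- 20) * w) / 9) ((22 + (- 4) * w) / 9) ((11 + 0 * w) / 3) = mk3 w 0 0 0 w 0 0 0 w.
Proof. rewrite mul3; congr (mk3 _ _ _ _ _ _ _ _ _); modsolve. Qed.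
Lemma ta01 : ta Pa0 Pa1 = - (49 / 96).
Proof. rewrite /ta ha01 ha10 ha00 ha11; modsolve. Qed.
Lemma ta01ok : ta Pa0 Pa1 != 0 /\ ta Pa0 Pa1 != 1.
Proof. rewrite ta01; apply: neg_ok; pos. Qed.
Lemma ta02 : ta Pa0 Pa2 = - (133 / 288).
Proof. rewrite /ta ha02 ha20 ha00 ha22; modsolve. Qed.
Lemma ta02ok : ta Pa0 Pa2 != 0 /\ ta Pa0 Pa2 != 1.
Proof. rewrite ta02; apply: neg_ok; pos. Qed.
Lemma ta03 : ta Pa0 Pa3 = - (19 / 9).
Proof. rewrite /ta ha03 ha30 ha00 ha33; modsolve. Qed.
Lemma ta03ok : ta Pa0 Pa3 != 0 /\ ta Pa0 Pa3 != 1.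
Proof. rewrite ta03; apply: neg_ok; pos. Qed.
Lemma ta04 : ta Pa0 Pa4 = - (163 / 72).
Proof. rewrite /ta ha04 ha40 ha00 ha44; modsolve. Qed.
Lemma ta04ok : ta Pa0 Pa4 != 0 /\ ta Pa0 Pa4 != 1.
Proof. rewrite ta04; apply: neg_ok; pos. Qed.
Lemma ta10 : ta Pa1 Pa0 = - (49 / 96).
Proof. rewrite /ta ha10 ha01 ha11 ha00; modsolve. Qed.
Lemma ta10ok : ta Pa1 Pa0 != 0 /\ ta Pa1 Pa0 != 1.
Proof. rewrite ta10; apply: neg_ok; pos. Qed.
Lemma ta12 : ta Pa1 Pa2 = 1 + (1 / 3).
Proof. rewrite /ta ha12 ha21 ha11 ha22; modsolve. Qed.
Lemma ta12ok : ta Pa1 Pa2 != 0 /\ ta Pa1 Pa2 != 1.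
Proof. rewrite ta12; apply: big_ok; pos. Qed.
Lemma ta13 : ta Pa1 Pa3 = 1 + (305 / 32).
Proof. rewrite /ta ha13 ha31 ha11 ha33; modsolve. Qed.
Lemma ta13ok : ta Pa1 Pa3 != 0 /\ ta Pa1 Pa3 != 1.
Proof. rewrite ta13; apply: big_ok; pos. Qed.
Lemma ta14 : ta Pa1 Pa4 = 1 + (687 / 64).
Proof. rewrite /ta ha14 ha41 ha11 ha44; modsolve. Qed.
Lemma ta14ok : ta Pa1 Pa4 != 0 /\ ta Pa1 Pa4 != 1.
Proof. rewrite ta14; apply: big_ok; pos. Qed.
Lemma ta20 : ta Pa2 Pa0 = - (133 / 288).
Proof. rewrite /ta ha20 ha02 ha22 ha00; modsolve. Qed.
Lemma ta20ok : ta Pa2 Pa0 != 0 /\ ta Pa2 Pa0 != 1.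
Proof. rewrite ta20; apply: neg_ok; pos. Qed.
Lemma ta21 : ta Pa2 Pa1 = 1 + (1 / 3).
Proof. rewrite /ta ha21 ha12 ha22 ha11; modsolve. Qed.
Lemma ta21ok : ta Pa2 Pa1 != 0 /\ ta Pa2 Pa1 != 1.
Proof. rewrite ta21; apply: big_ok; pos. Qed.
Lemma ta23 : ta Pa2 Pa3 = 1 + ((519 + 1000 * 1) / 288).
Proof. rewrite /ta ha23 ha32 ha22 ha33; modsolve. Qed.
Lemma ta23ok : ta Pa2 Pa3 != 0 /\ ta Pa2 Pa3 != 1.
Proof. rewrite ta23; apply: big_ok; pos. Qed.
Lemma ta24 : ta Pa2 Pa4 = 1 + ((865 + 1000 * 3) / 576).
Proof. rewrite /ta ha24 ha42 ha22 ha44; modsolve. Qed.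
Lemma ta24ok : ta Pa2 Pa4 != 0 /\ ta Pa2 Pa4 != 1.
Proof. rewrite ta24; apply: big_ok; pos. Qed.
Lemma ta30 : ta Pa3 Pa0 = - (19 / 9).
Proof. rewrite /ta ha30 ha03 ha33 ha00; modsolve. Qed.
Lemma ta30ok : ta Pa3 Pa0 != 0 /\ ta Pa3 Pa0 != 1.
Proof. rewrite ta30; apply: neg_ok; pos. Qed.
Lemma ta31 : ta Pa3 Pa1 = 1 + (305 / 32).
Proof. rewrite /ta ha31 ha13 ha33 ha11; modsolve. Qed.
Lemma ta31ok : ta Pa3 Pa1 != 0 /\ ta Pa3 Pa1 != 1.
Proof. rewrite ta31; apply: big_ok; pos. Qed.
Lemma ta32 : ta Pa3 Pa2 = 1 + ((519 + 1000 * 1) / 288).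
Proof. rewrite /ta ha32 ha23 ha33 ha22; modsolve. Qed.
Lemma ta32ok : ta Pa3 Pa2 != 0 /\ ta Pa3 Pa2 != 1.
Proof. rewrite ta32; apply: big_ok; pos. Qed.
Lemma ta34 : ta Pa3 Pa4 = 1 + (1 / 8).
Proof. rewrite /ta ha34 ha43 ha33 ha44; modsolve. Qed.
Lemma ta34ok : ta Pa3 Pa4 != 0 /\ ta Pa3 Pa4 != 1.
Proof. rewrite ta34; apply: big_ok; pos. Qed.
Lemma ta40 : ta Pa4 Pa0 = - (163 / 72).
Proof. rewrite /ta ha40 ha04 ha44 ha00; modsolve. Qed.
Lemma ta40ok : ta Pa4 Pa0 != 0 /\ ta Pa4 Pa0 != 1.
Proof. rewrite ta40; apply: neg_ok; pos. Qed.
Lemma ta41 : ta Pa4 Pa1 = 1 + (687 / 64).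
Proof. rewrite /ta ha41 ha14 ha44 ha11; modsolve. Qed.
Lemma ta41ok : ta Pa4 Pa1 != 0 /\ ta Pa4 Pa1 != 1.
Proof. rewrite ta41; apply: big_ok; pos. Qed.
Lemma ta42 : ta Pa4 Pa2 = 1 + ((865 + 1000 * 3) / 576).
Proof. rewrite /ta ha42 ha24 ha44 ha22; modsolve. Qed.
Lemma ta42ok : ta Pa4 Pa2 != 0 /\ ta Pa4 Pa2 != 1.
Proof. rewrite ta42; apply: big_ok; pos. Qed.
Lemma ta43 : ta Pa4 Pa3 = 1 + (1 / 8).
Proof. rewrite /ta ha43 ha34 ha44 ha33; modsolve. Qed.
Lemma ta43ok : ta Pa4 Pa3 != 0 /\ ta Pa4 Pa3 != 1.
Proof. rewrite ta43; apply: big_ok; pos. Qed.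
Definition Pb0 : 'cV[C]_3 := vec3 (E (-5) (-2)) (E (3) (2)) (E (5) (4)).
Definition Pb1 : 'cV[C]_3 := vec3 (E (-21) (-8)) (E (4) (3)) (E (18) (16)).
Definition Pb2 : 'cV[C]_3 := vec3 (E (43) (42)) (E (2) (-7)) (E (-22) (-44)).
Definition Pb3 : 'cV[C]_3 := vec3 (E (1) (0)) (E (0) (0)) (E (0) (0)).
Definition Pb4 : 'cV[C]_3 := vec3 (E (3) (0)) (E (0) (1)) (E (0) (0)).
Lemma hb00 : herm Pb0 Pb0 = (9 + 0 * w).
Proof. rewrite /Pb0 /Pb0 herm3; modsolve. Qed.
Lemma hb01 : herm Pb0 Pb1 = (2 + (- 11) * w).
Proof. rewrite /Pb0 /Pb1 herm3; modsolve. Qed.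
Lemma hb02 : herm Pb0 Pb2 = (36 + 33 * w).
Proof. rewrite /Pb0 /Pb2 herm3; modsolve. Qed.
Lemma hb03 : herm Pb0 Pb3 = (5 + 2 * w).
Proof. rewrite /Pb0 /Pb3 herm3; modsolve. Qed.
Lemma hb04 : herm Pb0 Pb4 = (14 + 3 * w).
Proof. rewrite /Pb0 /Pb4 herm3; modsolve. Qed.
Lemma hb10 : herm Pb1 Pb0 = (13 + 11 * w).
Proof. rewrite /Pb1 /Pb0 herm3; modsolve. Qed.
Lemma hb11 : herm Pb1 Pb1 = ((- 32) + 0 * w).
Proof. rewrite /Pb1 /Pb1 herm3; modsolve. Qed.
Lemma hb12 : herm Pb1 Pb2 = (64 + (- 64) * w).
Proof. rewrite /Pb1 /Pb2 herm3; modsolve. Qed.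
Lemma hb13 : herm Pb1 Pb3 = (21 + 8 * w).
Proof. rewrite /Pb1 /Pb3 herm3; modsolve. Qed.
Lemma hb14 : herm Pb1 Pb4 = (62 + 20 * w).
Proof. rewrite /Pb1 /Pb4 herm3; modsolve. Qed.
Lemma hb20 : herm Pb2 Pb0 = (3 + (- 33) * w).
Proof. rewrite /Pb2 /Pb0 herm3; modsolve. Qed.
Lemma hb21 : herm Pb2 Pb1 = (128 + 64 * w).
Proof. rewrite /Pb2 /Pb1 herm3; modsolve. Qed.
Lemma hb22 : herm Pb2 Pb2 = ((- 288) + 0 * w).
Proof. rewrite /Pb2 /Pb2 herm3; modsolve. Qed.
Lemma hb23 : herm Pb2 Pb3 = ((- 43) + (- 42) * w).
Proof. rewrite /Pb2 /Pb3 herm3; modsolve. Qed.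
Lemma hb24 : herm Pb2 Pb4 = ((- 138) + (- 128) * w).
Proof. rewrite /Pb2 /Pb4 herm3; modsolve. Qed.
Lemma hb30 : herm Pb3 Pb0 = (3 + (- 2) * w).
Proof. rewrite /Pb3 /Pb0 herm3; modsolve. Qed.
Lemma hb31 : herm Pb3 Pb1 = (13 + (- 8) * w).
Proof. rewrite /Pb3 /Pb1 herm3; modsolve. Qed.
Lemma hb32 : herm Pb3 Pb2 = ((- 1) + 42 * w).
Proof. rewrite /Pb3 /Pb2 herm3; modsolve. Qed.
Lemma hb33 : herm Pb3 Pb3 = ((- 1) + 0 * w).
Proof. rewrite /Pb3 /Pb3 herm3; modsolve. Qed.
Lemma hb34 : herm Pb3 Pb4 = ((- 3) + 0 * w).
Proof. rewrite /Pb3 /Pb4 herm3; modsolve. Qed.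
Lemma hb40 : herm Pb4 Pb0 = (11 + (- 3) * w).
Proof. rewrite /Pb4 /Pb0 herm3; modsolve. Qed.
Lemma hb41 : herm Pb4 Pb1 = (42 + (- 20) * w).
Proof. rewrite /Pb4 /Pb1 herm3; modsolve. Qed.
Lemma hb42 : herm Pb4 Pb2 = ((- 10) + 128 * w).
Proof. rewrite /Pb4 /Pb2 herm3; modsolve. Qed.
Lemma hb43 : herm Pb4 Pb3 = ((- 3) + 0 * w).
Proof. rewrite /Pb4 /Pb3 herm3; modsolve. Qed.
Lemma hb44 : herm Pb4 Pb4 = ((- 8) + 0 * w).
Proof. rewrite /Pb4 /Pb4 herm3; modsolve. Qed.
Lemma rb0 : refl Pb0 = mk3 (((- 47) + 0 * w) / 9) (((- 18) + 8 * w) / 9) (((- 26) + 20 * w) / 9) ((26 + 8 * w) / 9) ((5 + 0 * w) / 9) ((22 + (- 4) * w) / 9) ((46 + 20 * w) / 9) ((26 + 4 * w) / 9) ((11 + 0 * w) / 3).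
Proof. rewrite /Pb0 refl3 -/(Pb0) hb00; congr (mk3 _ _ _ _ _ _ _ _ _); modsolve. Qed.
Lemma rb1 : refl Pb1 = mk3 ((321 + 0 * w) / 16) ((45 + (- 31) * w) / 16) ((85 + (- 96) * w) / 8) (((- 76) + (- 31) * w) / 16) (((- 29) + 0 * w) / 16) (((- 28) + 5 * w) / 8) (((- 181) + (- 96) * w) / 8) (((- 33) + (- 5) * w) / 8) (((- 77) + 0 * w) / 4).
Proof. rewrite /Pb1 refl3 -/(Pb1) hb11; congr (mk3 _ _ _ _ _ _ _ _ _); modsolve. Qed.
Lemma rb2 : refl Pb2 = mk3 (((663 + 1000 * 1) + 0 * w) / 144) (((- 93) + (- 385) * w) / 144) ((451 + (- 484) * w) / 72) (((- 292) + (- 385) * w) / 144) (((- 211) + 0 * w) / 144) (((- 176) + (- 121) * w) / 72) (((- 935) + (- 484) * w) / 72) (((- 55) + 121 * w) / 72) (((- 133) + 0 * w) / 12).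
Proof. rewrite /Pb2 refl3 -/(Pb2) hb22; congr (mk3 _ _ _ _ _ _ _ _ _); modsolve. Qed.
Lemma rb3 : refl Pb3 = mk3 (1 + 0 * w) (0 + 0 * w) (0 + 0 * w) (0 + 0 * w) ((- 1) + 0 * w) (0 + 0 * w) (0 + 0 * w) (0 + 0 * w) ((- 1) + 0 * w).
Proof. rewrite /Pb3 refl3 -/(Pb3) hb33; congr (mk3 _ _ _ _ _ _ _ _ _); modsolve. Qed.
Lemma rb4 : refl Pb4 = mk3 ((5 + 0 * w) / 4) ((3 + 3 * w) / 4) (0 + 0 * w) ((0 + 3 * w) / 4) (((- 5) + 0 * w) / 4) (0 + 0 * w) (0 + 0 * w) (0 + 0 * w) ((- 1) + 0 * w).
Proof. rewrite /Pb4 refl3 -/(Pb4) hb44; congr (mk3 _ _ _ _ _ _ _ _ _); modsolve. Qed.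
Lemma mb0 : mk3 ((5 + 0 * w) / 4) ((3 + 3 * w) / 4) (0 + 0 * w) ((0 + 3 * w) / 4) (((- 5) + 0 * w) / 4) (0 + 0 * w) (0 + 0 * w) (0 + 0 * w) ((- 1) + 0 * w) *m mk3 (1 + 0 * w) (0 + 0 * w) (0 + 0 * w) (0 + 0 * w) ((- 1) + 0 * w) (0 + 0 * w) (0 + 0 * w) (0 + 0 * w) ((- 1) + 0 * w) = mk3 ((5 + 0 * w) / 4) (((- 3) + (- 3) * w) / 4) (0 + 0 * w) ((0 + 3 * w) / 4) ((5 + 0 * w) / 4) (0 + 0 * w) (0 + 0 * w) (0 + 0 * w) (1 + 0 * w).
Proof. rewrite mul3; congr (mk3 _ _ _ _ _ _ _ _ _); modsolve. Qed.
Lemma mb1 : mk3 ((5 + 0 * w) / 4) (((- 3) + (- 3) * w) / 4) (0 + 0 * w) ((0 + 3 * w) / 4) ((5 + 0 * w) / 4) (0 + 0 * w) (0 + 0 * w) (0 + 0 * w) (1 + 0 * w) *m mk3 (((663 + 1000 * 1) + 0 * w) / 144) (((- 93) + (- 385) * w) / 144) ((451 + (- 484) * w) / 72) (((- 292) + (- 385) * w) / 144) (((- 211) + 0 * w) / 144) (((- 176) + (- 121) * w) / 72) (((- 935) + (- 484) * w) / 72) (((- 55) + 121 * w) / 72) (((- 133) + 0 * w) / 12) = mk3 (((9 + 1000 * 2) + 219 * w) / 144) ((42 + (- 323) * w) / 144) ((605 + (- 473) * w) / 72) (((- 365) + 766 * w) / 144) ((25 + 219 * w) / 144) ((143 + 550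 * w) / 72) (((- 935) + (- 484) * w) / 72) (((- 55) + 121 * w) / 72) (((- 133) + 0 * w) / 12).
Proof. rewrite mul3; congr (mk3 _ _ _ _ _ _ _ _ _); modsolve. Qed.
Lemma mb2 : mk3 (((9 + 1000 * 2) + 219 * w) / 144) ((42 + (- 323) * w) / 144) ((605 + (- 473) * w) / 72) (((- 365) + 766 * w) / 144) ((25 + 219 * w) / 144) ((143 + 550 * w) / 72) (((- 935) + (- 484) * w) / 72) (((- 55) + 121 * w) / 72) (((- 133) + 0 * w) / 12) *m mk3 ((321 + 0 * w) / 16) ((45 + (- 31) * w) / 16) ((85 + (- 96) * w) / 8) (((- 76) + (- 31) * w) / 16) (((- 29) + 0 * w) / 16) (((- 28) + 5 * w) / 8) (((- 181) + (- 96) * w) / 8) (((- 33) + (- 5) * w) / 8) (((- 77) + 0 * w) / 4) = mk3 ((47 + 47 * w) / 9) ((26 + 18 * w) / 9) ((46 + 26 * w) / 9) (((- 18) + (- 26) * w) / 9) (((- 5) + (- 5) * w) / 9) (((- 26) + (- 22) * w) / 9) (((- 26) + (- 46) * w) / 9) (((- 22) + (- 26) * w) / 9) (((- 11) + (- 11) * w) / 3).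
Proof. rewrite mul3; congr (mk3 _ _ _ _ _ _ _ _ _); modsolve. Qed.
Lemma mb3 : mk3 ((47 + 47 * w) / 9) ((26 + 18 * w) / 9) ((46 + 26 * w) / 9) (((- 18) + (- 26) * w) / 9) (((- 5) + (- 5) * w) / 9) (((- 26) + (- 22) * w) / 9) (((- 26) + (- 46) * w) / 9) (((- 22) + (- 26) * w) / 9) (((- 11) + (- 11) * w) / 3) *m mk3 (((- 47) + 0 * w) / 9) (((- 18) + 8 * w) / 9) (((- 26) + 20 * w) / 9) ((26 + 8 * w) / 9) ((5 + 0 * w) / 9) ((22 + (- 4) * w) / 9) ((46 + 20 * w) / 9) ((26 + 4 * w) / 9) ((11 + 0 * w) / 3) = mk3 (w ^+ 2) 0 0 0 (w ^+ 2) 0 0 0 (w ^+ 2).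
Proof. rewrite mul3; congr (mk3 _ _ _ _ _ _ _ _ _); modsolve. Qed.
Lemma tb01 : ta Pb0 Pb1 = - (49 / 96).
Proof. rewrite /ta hb01 hb10 hb00 hb11; modsolve. Qed.
Lemma tb01ok : ta Pb0 Pb1 != 0 /\ ta Pb0 Pb1 != 1.
Proof. rewrite tb01; apply: neg_ok; pos. Qed.
Lemma tb02 : ta Pb0 Pb2 = - (133 / 288).
Proof. rewrite /ta hb02 hb20 hb00 hb22; modsolve. Qed.
Lemma tb02ok : ta Pb0 Pb2 != 0 /\ ta Pb0 Pb2 != 1.
Proof. rewrite tb02; apply: neg_ok; pos. Qed.
Lemma tb03 : ta Pb0 Pb3 = - (19 / 9).
Proof. rewrite /ta hb03 hb30 hb00 hb33; modsolve. Qed.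
Lemma tb03ok : ta Pb0 Pb3 != 0 /\ ta Pb0 Pb3 != 1.
Proof. rewrite tb03; apply: neg_ok; pos. Qed.
Lemma tb04 : ta Pb0 Pb4 = - (163 / 72).
Proof. rewrite /ta hb04 hb40 hb00 hb44; modsolve. Qed.
Lemma tb04ok : ta Pb0 Pb4 != 0 /\ ta Pb0 Pb4 != 1.
Proof. rewrite tb04; apply: neg_ok; pos. Qed.
Lemma tb10 : ta Pb1 Pb0 = - (49 / 96).
Proof. rewrite /ta hb10 hb01 hb11 hb00; modsolve. Qed.
Lemma tb10ok : ta Pb1 Pb0 != 0 /\ ta Pb1 Pb0 != 1.
Proof. rewrite tb10; apply: neg_ok; pos. Qed.
Lemma tb12 : ta Pb1 Pb2 = 1 + (1 / 3).
Proof. rewrite /ta hb12 hb21 hb11 hb22; modsolve. Qed.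
Lemma tb12ok : ta Pb1 Pb2 != 0 /\ ta Pb1 Pb2 != 1.
Proof. rewrite tb12; apply: big_ok; pos. Qed.
Lemma tb13 : ta Pb1 Pb3 = 1 + (305 / 32).
Proof. rewrite /ta hb13 hb31 hb11 hb33; modsolve. Qed.
Lemma tb13ok : ta Pb1 Pb3 != 0 /\ ta Pb1 Pb3 != 1.
Proof. rewrite tb13; apply: big_ok; pos. Qed.
Lemma tb14 : ta Pb1 Pb4 = 1 + (687 / 64).
Proof. rewrite /ta hb14 hb41 hb11 hb44; modsolve. Qed.
Lemma tb14ok : ta Pb1 Pb4 != 0 /\ ta Pb1 Pb4 != 1.
Proof. rewrite tb14; apply: big_ok; pos. Qed.
Lemma tb20 : ta Pb2 Pb0 = - (133 / 288).
Proof. rewrite /ta hb20 hb02 hb22 hb00; modsolve. Qed.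
Lemma tb20ok : ta Pb2 Pb0 != 0 /\ ta Pb2 Pb0 != 1.
Proof. rewrite tb20; apply: neg_ok; pos. Qed.
Lemma tb21 : ta Pb2 Pb1 = 1 + (1 / 3).
Proof. rewrite /ta hb21 hb12 hb22 hb11; modsolve. Qed.
Lemma tb21ok : ta Pb2 Pb1 != 0 /\ ta Pb2 Pb1 != 1.
Proof. rewrite tb21; apply: big_ok; pos. Qed.
Lemma tb23 : ta Pb2 Pb3 = 1 + ((519 + 1000 * 1) / 288).
Proof. rewrite /ta hb23 hb32 hb22 hb33; modsolve. Qed.
Lemma tb23ok : ta Pb2 Pb3 != 0 /\ ta Pb2 Pb3 != 1.
Proof. rewrite tb23; apply: big_ok; pos. Qed.
Lemma tb24 : ta Pb2 Pb4 = 1 + ((865 + 1000 * 3) / 576).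
Proof. rewrite /ta hb24 hb42 hb22 hb44; modsolve. Qed.
Lemma tb24ok : ta Pb2 Pb4 != 0 /\ ta Pb2 Pb4 != 1.
Proof. rewrite tb24; apply: big_ok; pos. Qed.
Lemma tb30 : ta Pb3 Pb0 = - (19 / 9).
Proof. rewrite /ta hb30 hb03 hb33 hb00; modsolve. Qed.
Lemma tb30ok : ta Pb3 Pb0 != 0 /\ ta Pb3 Pb0 != 1.
Proof. rewrite tb30; apply: neg_ok; pos. Qed.
Lemma tb31 : ta Pb3 Pb1 = 1 + (305 / 32).
Proof. rewrite /ta hb31 hb13 hb33 hb11; modsolve. Qed.
Lemma tb31ok : ta Pb3 Pb1 != 0 /\ ta Pb3 Pb1 != 1.
Proof. rewrite tb31; apply: big_ok; pos. Qed.
Lemma tb32 : ta Pb3 Pb2 = 1 + ((519 + 1000 * 1) / 288).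
Proof. rewrite /ta hb32 hb23 hb33 hb22; modsolve. Qed.
Lemma tb32ok : ta Pb3 Pb2 != 0 /\ ta Pb3 Pb2 != 1.
Proof. rewrite tb32; apply: big_ok; pos. Qed.
Lemma tb34 : ta Pb3 Pb4 = 1 + (1 / 8).
Proof. rewrite /ta hb34 hb43 hb33 hb44; modsolve. Qed.
Lemma tb34ok : ta Pb3 Pb4 != 0 /\ ta Pb3 Pb4 != 1.
Proof. rewrite tb34; apply: big_ok; pos. Qed.
Lemma tb40 : ta Pb4 Pb0 = - (163 / 72).
Proof. rewrite /ta hb40 hb04 hb44 hb00; modsolve. Qed.
Lemma tb40ok : ta Pb4 Pb0 != 0 /\ ta Pb4 Pb0 != 1.
Proof. rewrite tb40; apply: neg_ok; pos. Qed.
Lemma tb41 : ta Pb4 Pb1 = 1 + (687 / 64).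
Proof. rewrite /ta hb41 hb14 hb44 hb11; modsolve. Qed.
Lemma tb41ok : ta Pb4 Pb1 != 0 /\ ta Pb4 Pb1 != 1.
Proof. rewrite tb41; apply: big_ok; pos. Qed.
Lemma tb42 : ta Pb4 Pb2 = 1 + ((865 + 1000 * 3) / 576).
Proof. rewrite /ta hb42 hb24 hb44 hb22; modsolve. Qed.
Lemma tb42ok : ta Pb4 Pb2 != 0 /\ ta Pb4 Pb2 != 1.
Proof. rewrite tb42; apply: big_ok; pos. Qed.
Lemma tb43 : ta Pb4 Pb3 = 1 + (1 / 8).
Proof. rewrite /ta hb43 hb34 hb44 hb33; modsolve. Qed.
Lemma tb43ok : ta Pb4 Pb3 != 0 /\ ta Pb4 Pb3 != 1.
Proof. rewrite tb43; apply: big_ok; pos. Qed.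

Definition ptsa (i : 'I_5) : 'cV[C]_3 :=
  match val i with 0 => Pa0 | 1 => Pa1 | 2 => Pa2 | 3 => Pa3 | _ => Pa4 end.
Lemma inPa : in_P Sigma8 w ptsa.
Proof.
split.
1: case => [[|[|[|[|[|//]]]]] Hi]; rewrite /nonisotropic /ptsa /=;
    rewrite ?ha00 ?ha11 ?ha22 ?ha33 ?ha44 ?mul0r ?addr0 ?oppr_eq0; apply: lt0r_neq0; pos.
1: case => [[|[|[|[|[|//]]]]] Hi]; case => [[|[|[|[|[|//]]]]] Hj] //= _; rewrite /ptsa /=;
   first [exact: ta01ok | exact: ta02ok | exact: ta03ok | exact: ta04ok |
              exact: ta10ok | exact: ta12ok | exact: ta13ok | exact: ta14ok |
              exact: ta20ok | exact: ta21ok | exact: ta23ok | exact: ta24ok |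
              exact: ta30ok | exact: ta31ok | exact: ta32ok | exact: ta34ok |
              exact: ta40ok | exact: ta41ok | exact: ta42ok | exact: ta43ok].
1: case => [[|[|[|[|[|//]]]]] Hi]; rewrite /has_sign /ptsa /Sigma8 /=;
   first [by right; split => //; rewrite ha00 mul0r addr0; pos
         | by left; split => //; rewrite ?ha11 ?ha22 ?ha33 ?ha44 mul0r addr0 oppr_lt0; pos].
rewrite /ptsa /= ra4 ra3 ra2 ra1 ra0 ma0 ma1 ma2 ma3 scal3 //.
Qed.
Definition ptsb (i : 'I_5) : 'cV[C]_3 :=
  match val i with 0 => Pb0 | 1 => Pb1 | 2 => Pb2 | 3 => Pb3 | _ => Pb4 end.
Lemma inPb : in_P Sigma8 (w ^+ 2) ptsb.
Proof.
split.
1: case => [[|[|[|[|[|//]]]]] Hi]; rewrite /nonisotropic /ptsb /=;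
    rewrite ?hb00 ?hb11 ?hb22 ?hb33 ?hb44 ?mul0r ?addr0 ?oppr_eq0; apply: lt0r_neq0; pos.
1: case => [[|[|[|[|[|//]]]]] Hi]; case => [[|[|[|[|[|//]]]]] Hj] //= _; rewrite /ptsb /=;
   first [exact: tb01ok | exact: tb02ok | exact: tb03ok | exact: tb04ok |
              exact: tb10ok | exact: tb12ok | exact: tb13ok | exact: tb14ok |
              exact: tb20ok | exact: tb21ok | exact: tb23ok | exact: tb24ok |
              exact: tb30ok | exact: tb31ok | exact: tb32ok | exact: tb34ok |
              exact: tb40ok | exact: tb41ok | exact: tb42ok | exact: tb43ok].
1: case => [[|[|[|[|[|//]]]]] Hi]; rewrite /has_sign /ptsb /Sigma8 /=;
   first [by right; split => //; rewrite hb00 mul0r addr0; pos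
         | by left; split => //; rewrite ?hb11 ?hb22 ?hb33 ?hb44 mul0r addr0 oppr_lt0; pos].
rewrite /ptsb /= rb4 rb3 rb2 rb1 rb0 mb0 mb1 mb2 mb3 scal3 //.
Qed.
End S.
Lemma final (F : numDomainType) (N X Y zz s : F) :
  N < 0 -> X <= N -> Y <= N -> 0 <= zz -> s \is Num.real ->
  N^+3 - N*zz - N*X^+2 - N*Y^+2 + X*Y*s <= 0 -> s < 0.
Proof.
move=> hN hX hY hz hs H.
have hN' : 0 < - N by rewrite oppr_gt0.
have hX' : - N <= - X by rewrite lerN2.
have hY' : - N <= - Y by rewrite lerN2.
have hX0 : 0 < - X := lt_le_trans hN' hX'.
have hY0 : 0 < - Y := lt_le_trans hN' hY'.
rewrite real_ltNge ?real0 //; apply/negP => s0.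
have e : N^+3 - N*zz - N*X^+2 - N*Y^+2 + X*Y*s
   = (-N) * ((-X) * (-X) - (-N) * (-N)) + (-N) * ((-Y)*(-Y)) + (-N) * zz + ((-X)*(-Y)) * s by ring.
have h1 : 0 <= (-X) * (-X) - (-N) * (-N).
  rewrite subr_ge0; apply: ler_pM => //; exact: ltW.
have h2 : 0 < (-N) * ((-Y)*(-Y)) by rewrite !mulr_gt0.
have h3 : 0 <= (-N) * zz by rewrite mulr_ge0 // ltW.
have h4 : 0 <= ((-X)*(-Y)) * s by rewrite mulr_ge0 // ltW // mulr_gt0.
have h5 : 0 <= (-N) * ((-X) * (-X) - (-N) * (-N)) by rewrite mulr_ge0 // ltW.
have : 0 < N^+3 - N*zz - N*X^+2 - N*Y^+2 + X*Y*s.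
  rewrite e; apply: ltr_wpDr h4 _; apply: ltr_wpDr h3 _; exact: ltr_pwDr h2 h5.
by move=> /lt_le_trans /(_ H); rewrite ltxx.
Qed.

Section Part1.
Variable R : rcfType.
Local Notation C := (R[i]).

Lemma cM (x y : C) : (x * y)^* = x^* * y^*. Proof. exact: rmorphM. Qed.
Lemma cD (x y : C) : (x + y)^* = x^* + y^*. Proof. exact: rmorphD. Qed.
Lemma cN (x : C) : (- x)^* = - x^*. Proof. exact: rmorphN. Qed.
Lemma cB (x y : C) : (x - y)^* = x^* - y^*. Proof. exact: rmorphB. Qed.
Lemma cV (x : C) : (x^-1)^* = (x^*)^-1. Proof. exact: fmorphV. Qed.
Lemma cK (x : C) : (x^*)^* = x. Proof. exact: conjCK. Qed.
Lemma c2 : (2 : C)^* = 2. Proof. exact: rmorph_nat. Qed.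
Lemma c1 : (1 : C)^* = 1. Proof. exact: rmorph1. Qed.

Definition i0 : 'I_3 := @Ordinal 3 0 isT.
Definition i1 : 'I_3 := @Ordinal 3 1 isT.
Definition i2 : 'I_3 := @Ordinal 3 2 isT.

Lemma sum3 (F : 'I_3 -> C) : \sum_(i < 3) F i = F i0 + F i1 + F i2.
Proof.
rewrite !big_ord_recr big_ord0 /= add0r.
by congr (F _ + F _ + F _); apply: val_inj.
Qed.

Lemma ord3 (i : 'I_3) : [\/ i = i0, i = i1 | i = i2].
Proof.
case: i => [[|[|[|//]]] Hi]; [apply: Or31 | apply: Or32 | apply: Or33]; exact: val_inj.
Qed.

Lemma hermE (x y : 'cV[C]_3) : herm x y =
  - (x i0 0 * (y i0 0)^*) + x i1 0 * (y i1 0)^* + x i2 0 * (y i2 0)^*.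
Proof. rewrite /herm sum3 /sgnJ /=; ring. Qed.

Lemma hermC (x y : 'cV[C]_3) : herm y x = (herm x y)^*.
Proof. rewrite !hermE !(cD, cN, cM, cK); ring. Qed.

Lemma hermBl (x y z : 'cV[C]_3) : herm (x - y) z = herm x z - herm y z.
Proof. rewrite !hermE !mxE; ring. Qed.
Lemma hermNl (x z : 'cV[C]_3) : herm (- x) z = - herm x z.
Proof. rewrite !hermE !mxE; ring. Qed.
Lemma hermZl c (x z : 'cV[C]_3) : herm (c *: x) z = c * herm x z.
Proof. rewrite !hermE !mxE; ring. Qed.
Lemma hermBr (x y z : 'cV[C]_3) : herm z (x - y) = herm z x - herm z y.
Proof. rewrite !hermE !mxE !(cB, cN, cD); ring. Qed.
Lemma hermZr c (x z : 'cV[C]_3) : herm z (c *: x) = c^* * herm z x.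
Proof. rewrite !hermE !mxE !cM; ring. Qed.

Lemma hermRR (p : 'cV[C]_3) : (herm p p)^* = herm p p.
Proof. by rewrite -hermC. Qed.

Lemma reflE (p x : 'cV[C]_3) : refl p *m x = (2 * herm x p / herm p p) *: p - x.
Proof.
apply/matrixP => i j; rewrite (ord1 j) !mxE sum3 !mxE.
set h := herm p p.
rewrite hermE /sgnJ.
case: (ord3 i) => ->; rewrite /=; ring.
Qed.


Lemma refl_adj (p x y : 'cV[C]_3) : herm (refl p *m x) y = herm x (refl p *m y).
Proof.
rewrite !reflE hermBl hermZl hermBr hermZr !(cM, cV) c2 hermRR -hermC.
ring.
Qed.

Lemma refl_inv (p x : 'cV[C]_3) : herm p p != 0 -> refl p *m (refl p *m x) = x.
Proof.
move=> hp.
have e : 2 * herm (refl p *m x) p / herm p p = 2 * herm x p / herm p p.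
  rewrite reflE hermBl hermZl; field; exact: hp.
rewrite [refl p *m (refl p *m x)]reflE e reflE.
by rewrite opprB addrC subrK.
Qed.

Lemma refl_norm (p x : 'cV[C]_3) : herm p p != 0 ->
  herm (refl p *m x) (refl p *m x) = herm x x.
Proof. by move=> hp; rewrite refl_adj refl_inv. Qed.

Lemma L1 (n v : 'cV[C]_3) : herm n n < 0 -> herm v n = 0 -> 0 <= herm v v.
Proof.
rewrite !hermE.
set n0 := n i0 0; set n1 := n i1 0; set n2 := n i2 0.
set v0 := v i0 0; set v1 := v i1 0; set v2 := v i2 0.
move=> hn hv.
set t := v1 * n1^* + v2 * n2^*.
have ht : v0 * n0^* = t.
  apply/eqP; rewrite -subr_eq0 -oppr_eq0; apply/eqP; rewrite -hv /t; ring.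
set N0 := n0 * n0^*; set NQ := n1 * n1^* + n2 * n2^*.
set V0 := v0 * v0^*; set VQ := v1 * v1^* + v2 * v2^*.
have hVN : V0 * N0 = t * t^*.
  rewrite -ht /V0 /N0 !cM cK; ring.
have hlag : VQ * NQ - t * t^* = (v1 * n2 - v2 * n1) * (v1 * n2 - v2 * n1)^*.
  rewrite /VQ /NQ /t !(cB, cD, cM, cK); ring.
have hNQ : 0 <= NQ by rewrite addr_ge0 // mul_conjC_ge0.
have hVQ : 0 <= VQ by rewrite addr_ge0 // mul_conjC_ge0.
have hlt : NQ < N0.
  by move: hn; rewrite -addrA -/NQ addrC subr_lt0.
have hN0 : 0 < N0 := le_lt_trans hNQ hlt.
have e : N0 * (- V0 + VQ) = (N0 - NQ) * VQ + (VQ * NQ - t * t^*).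
  rewrite mulrDr mulrN (mulrC N0 V0) hVN; ring.
have : 0 <= N0 * (- V0 + VQ).
  rewrite e; apply: addr_ge0.
    by apply: mulr_ge0 => //; rewrite subr_ge0 ltW.
  by rewrite hlag mul_conjC_ge0.
rewrite pmulr_rge0 //.
by rewrite -/V0 -addrA.
Qed.


Lemma L2 (n a : 'cV[C]_3) : herm n n < 0 ->
  herm n n * herm a a <= herm n a * herm a n.
Proof.
move=> hn.
have hN0 : herm n n != 0 by rewrite lt_eqF.
set v := a - (herm a n / herm n n) *: n.
have hv : herm v n = 0.
  rewrite /v hermBl hermZl; field; exact: hN0.
have := @L1 n v hn hv.
have -> : herm v v = herm a a - herm n a * herm a n / herm n n.
  rewrite /v !(hermBl, hermBr, hermZl, hermZr) !(cM, cV) hermRR -hermC.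
  field; exact: hN0.
move=> h.
have : 0 <= (- herm n n) * (herm a a - herm n a * herm a n / herm n n).
  by apply: mulr_ge0 => //; rewrite oppr_ge0 ltW.
have -> : (- herm n n) * (herm a a - herm n a * herm a n / herm n n)
  = herm n a * herm a n - herm n n * herm a a by field; exact: hN0.
by rewrite subr_ge0.
Qed.

Lemma gram (u v x : 'cV[C]_3) :
  herm u u * (herm v v * herm x x - herm v x * herm x v)
  - herm u v * (herm v u * herm x x - herm v x * herm x u)
  + herm u x * (herm v u * herm x v - herm v v * herm x u) <= 0.
Proof.
set d := u i0 0 * (v i1 0 * x i2 0 - v i2 0 * x i1 0)
       - u i1 0 * (v i0 0 * x i2 0 - v i2 0 * x i0 0)
       + u i2 0 * (v i0 0 * x i1 0 - v i1 0 * x i0 0).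
have hd : d^* = (u i0 0)^* * ((v i1 0)^* * (x i2 0)^* - (v i2 0)^* * (x i1 0)^*)
       - (u i1 0)^* * ((v i0 0)^* * (x i2 0)^* - (v i2 0)^* * (x i0 0)^*)
       + (u i2 0)^* * ((v i0 0)^* * (x i1 0)^* - (v i1 0)^* * (x i0 0)^*).
  rewrite /d !(cD, cB, cN, cM); ring.
have e : herm u u * (herm v v * herm x x - herm v x * herm x v)
  - herm u v * (herm v u * herm x x - herm v x * herm x u)
  + herm u x * (herm v u * herm x v - herm v v * herm x u) = - (d * d^*).
  rewrite hd !hermE /d; ring.
by rewrite e oppr_le0 mul_conjC_ge0.
Qed.


Lemma Xbound (n a : 'cV[C]_3) : herm n n < 0 -> herm a a < 0 ->
  [/\ herm n (refl a *m n) = 2 * (herm n a * herm a n) / herm a a - herm n n,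
      herm (refl a *m n) n = 2 * (herm n a * herm a n) / herm a a - herm n n,
      herm (refl a *m n) (refl a *m n) = herm n n &
      2 * (herm n a * herm a n) / herm a a - herm n n <= herm n n].
Proof.
move=> hn ha.
have hA0 : herm a a != 0 by rewrite lt_eqF.
split.
- rewrite reflE hermBr hermZr !(cM, cV) c2 hermRR -hermC; field; exact: hA0.
- rewrite reflE hermBl hermZl; field; exact: hA0.
- exact: refl_norm.
have cs := @L2 n a hn.
have h : herm n a * herm a n / herm a a <= herm n n by rewrite ler_ndivrMr.
have -> : 2 * (herm n a * herm a n) / herm a a - herm n n
  = herm n a * herm a n / herm a a + herm n a * herm a n / herm a a - herm n n by ring.
rewrite lerBlDr; exact: lerD.
Qed.

Lemma keyL (n a b : 'cV[C]_3) : herm n n < 0 -> herm a a < 0 -> herm b b < 0 ->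
  herm (refl a *m n) (refl b *m n) + (herm (refl a *m n) (refl b *m n))^* < 0.
Proof.
move=> hn ha hb.
have [eX eXn hxx hX] := Xbound n a hn ha.
have [eY eYn hyy hY] := Xbound n b hn hb.
set x := refl a *m n in eX eXn hxx hX *.
set y := refl b *m n in eY eYn hyy hY *.
set X := 2 * (herm n a * herm a n) / herm a a - herm n n in eX eXn hX.
set Y := 2 * (herm n b * herm b n) / herm b b - herm n n in eY eYn hY.
set N := herm n n in eX eXn hxx hX eY eYn hyy hY hn.
set z := herm x y.
have g := gram n x y.
rewrite -/N hxx hyy eX eXn eY eYn -/z (hermC x y) -/z in g.
apply: (@final _ N X Y (z * z^*)) => //.
- exact: mul_conjC_ge0.
- have -> : z + z^* = 2 * 'Re z by rewrite ReE; field.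
  by apply: realM; [exact: realn | exact: Creal_Re].
- move: g; congr (_ <= _); ring.
Qed.


Definition vecn (a b c : C) : 'cV[C]_3 :=
  \col_(i < 3) (if i == 0 :> nat then a else if i == 1 :> nat then b else c).

Lemma part1 : ~ exists p : 'I_5 -> 'cV[C]_3, in_P Sigma8 1 p.
Proof.
case=> p [hiso hta hsign hprod].
have hq : 0 < herm (p 0) (p 0).
  case: (hsign 0) => [[e _]|[_ h]] //.
have hneg k : (k == 1) || (k == 2) || (k == 3) || (k == 4) -> herm (p k) (p k) < 0.
  move=> hk; case: (hsign k) => [[_ h]|[e _]] //.
  all: try by move: e hk; rewrite /Sigma8; case: k => [[|[|[|[|[|//]]]]] Hk].
have h1 := hneg 1 isT.
have h2 := hneg 2 isT.
have h3 := hneg 3 isT.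
have h4 := hneg 4 isT.
set q := p 0 in hq hprod.
set S := q i1 0 * (q i1 0)^* + q i2 0 * (q i2 0)^*.
set n := vecn S (q i1 0 * (q i0 0)^*) (q i2 0 * (q i0 0)^*).
have hnq : herm n q = 0.
  rewrite hermE /n !mxE /= /S; ring.
have hS : 0 < S.
  have -> : S = herm q q + q i0 0 * (q i0 0)^* by rewrite hermE /S; ring.
  by apply: ltr_wpDr => //; exact: mul_conjC_ge0.
have hn : herm n n < 0.
  have -> : herm n n = - (S * herm q q).
    rewrite hermE /n !mxE /= /S !(cD, cM, cK) hermE; ring.
  by rewrite oppr_lt0 mulr_gt0.
have hR0 : refl q *m n = - n.
  by rewrite reflE hnq mulr0 mul0r scale0r sub0r.
have H := congr1 (mulmx^~ n) hprod.
rewrite /= mul1mx -!mulmxA hR0 !mulmxN in H.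
set m := refl (p 2) *m (refl (p 1) *m n) in H.
have H2 : m = - (refl (p 3) *m (refl (p 4) *m n)).
  have H1 : refl (p 4) *m (refl (p 3) *m m) = - n by rewrite -H opprK.
  have := congr1 (mulmx (refl (p 4))) H1.
  rewrite refl_inv; last exact: hiso.
  rewrite mulmxN => H1'.
  have := congr1 (mulmx (refl (p 3))) H1'.
  rewrite refl_inv; last exact: hiso.
  by rewrite mulmxN.
have k1 := keyL n (p 1) (p 2) hn h1 h2.
have k2 := keyL n (p 4) (p 3) hn h4 h3.
rewrite -(refl_adj (p 2)) -/m H2 hermNl cN -opprD oppr_lt0 in k1.
rewrite -(refl_adj (p 3)) in k2.
by move: (lt_trans k2 k1); rewrite ltxx.
Qed.

End Part1.

Theorem mainTheorem8 (R : rcfType) :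
  (~ exists p : 'I_5 -> 'cV[R[i]]_3, in_P Sigma8 1 p) /\
  (exists p : 'I_5 -> 'cV[R[i]]_3, in_P Sigma8 (omega R) p) /\
  (exists p : 'I_5 -> 'cV[R[i]]_3, in_P Sigma8 ((omega R) ^+ 2) p).
Proof.
split; first exact: part1.
split; [exists (ptsa R); exact: inPa | exists (ptsb R); exact: inPb].
Qed.
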